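(* Let $(\Delta,\mathcal H)$ be a generic cut with associated simplicial complexes $K_\Delta,K_+,K_-$ on $\widetilde{[m]}=[m]\cup\{o\}$, and let $Z=\{\sigma\subset\widetilde{[m]}: F_\sigma\neq\varnothing\text{ and }F_\sigma\subset\Delta_+\setminus H_o\}$ where $F_\sigma=\bigcap_{i\in\sigma}H_i$. Then $K_-$ is the strong connected sum $K_+\#^ZK_\Delta$.
   Context: Let $\Delta\subset\mathbb R^n$ be an $n$-dimensional simple polytope $\Delta=\{x:\langle x,\lambda_i\rangle+\eta_i\ge0,\ i=1,\dots,m\}$ whose facets $H_i=\Delta\cap\{\langle x,\lambda_i\rangle+\eta_i=0\}$ are all nonempty. A generic cut is a hyperplane $\mathcal H=\{\langle x,\lambda_0\rangle+\xi=0\}$ in general position with the hyperplanes $\{\langle x,\lambda_i\rangle+\eta_i=0\}$ and with $H_o:=\mathcal H\cap\Delta\neq\varnothing$ (the facet indexed by $o$). Set $\Delta_\pm=\Delta\cap\{\pm(\langle x,\lambda_0\rangle+\xi)\ge0\}$, $K_\Delta=\{\sigma\subset[m]:\bigcap_{i\in\sigma}H_i\ne\varnothing\}\cup\{\varnothing\}$, $K_\pm=\{\sigma\subset\widetilde{[m]}:\bigcap_{i\in\sigma}(H_i\cap\Delta_\pm)\ne\varnothing\}\cup\{\varnothing\}$. Simplicial-complex notation: for $Z\subset K$, $\overline Z$ is the smallest subcomplex containing $Z$; $O_K(Z)=\{\sigma\in K:\sigma\supseteq\tau$ for some $\tau\in Z\}$; $\operatorname{Del}_Z(K)=K\setminus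 O_K(Z)$; pure means all maximal faces have the same dimension. Connected sum: for simplicial complexes $K_1,K_2$ on the same vertex set and $Z\subset K_1\cap K_2$ with $\varnothing\notin Z$ and $O_{K_1\cup K_2}(Z)\subset K_1\cap K_2$, $K_1\#^ZK_2:=\operatorname{Del}_Z(K_1\cup K_2)$. It is strong if $K_1,K_2,W:=K_1\cap K_2$ are pure of the same dimension and $Z=W\setminus\overline{K_1\setminus W}=W\setminus\overline{K_2\setminus W}$. *)

(* Defs.v *)
From HB Require Import structures.
From mathcomp Require Import all_boot all_order all_algebra.
From mathcomp Require Import reals.
Set Implicit Arguments. Unset Strict Implicit. Unset Printing Implicit Defensive.
Import Order.TTheory GRing.Theory Num.Theory.
Local Open Scope ring_scope.

Section Complexes.
Variable T : finType.
Definition complex := {set T} -> Prop.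

Definition starO (K Z : complex) : complex :=
  fun s => K s /\ exists t, Z t /\ t \subset s.
Definition Del (Z K : complex) : complex := fun s => K s /\ ~ starO K Z s.
(* smallest subcomplex containing Z (complexes always contain the empty face) *)
Definition closure (Z : complex) : complex :=
  fun s => s = set0 \/ exists t, Z t /\ s \subset t.
Definition cunion (K1 K2 : complex) : complex := fun s => K1 s \/ K2 s.
Definition cinter (K1 K2 : complex) : complex := fun s => K1 s /\ K2 s.
Definition cdiff (K1 K2 : complex) : complex := fun s => K1 s /\ ~ K2 s.
Definition maximal_face (K : complex) (s : {set T}) :=
  K s /\ forall t, K t -> s \subset t -> t = s.
(* all maximal faces have c vertices, i.e. dimension c - 1 *)
Definition pure_card (K : complex) (c : nat) :=
  forall s, maximal_face K s -> #|s| = c.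

Definition connected_sum (K1 K2 Z K : complex) :=
  [/\ (forall s, Z s -> K1 s /\ K2 s),
      ~ Z set0,
      (forall s, starO (cunion K1 K2) Z s -> K1 s /\ K2 s) &
      (forall s, K s <-> Del Z (cunion K1 K2) s)].

Definition strong_connected_sum (K1 K2 Z K : complex) :=
  let W := cinter K1 K2 in
  [/\ connected_sum K1 K2 Z K,
      (exists c, [/\ pure_card K1 c, pure_card K2 c & pure_card W c]),
      (forall s, Z s <-> (W s /\ ~ closure (cdiff K1 W) s)) &
      (forall s, Z s <-> (W s /\ ~ closure (cdiff K2 W) s))].
End Complexes.

Section Geometry.
Variables (R : realType) (n : nat).
Local Notation pt := 'rV[R]_n.

Definition dot (x y : pt) : R := \sum_(j < n) x 0 j * y 0 j.

Definition aff_indep k (p : 'I_k -> pt) :=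
  forall c : 'I_k -> R, \sum_i c i = 0 -> \sum_i c i *: p i = 0 ->
    forall i, c i = 0.

(* affine dimension of a subset of R^n (the empty set has dimension -1) *)
Definition affdim (S : pt -> Prop) (d : int) : Prop :=
  match d with
  | Posz k => (exists p : 'I_k.+1 -> pt, (forall i, S (p i)) /\ aff_indep p) /\
              ~ (exists p : 'I_k.+2 -> pt, (forall i, S (p i)) /\ aff_indep p)
  | Negz 0 => forall x, ~ S x
  | Negz _ => False
  end.

Variables (m : nat) (lam : 'I_m -> pt) (eta : 'I_m -> R)
          (lam0 : pt) (xi : R).

Definition Delta (x : pt) := forall i, 0 <= dot x (lam i) + eta i.

Definition hypm (j : 'I_m) (x : pt) := dot x (lam j) + eta j = 0.
Definition facetm (j : 'I_m) (x : pt) := Delta x /\ hypm j x.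

(* hyperplanes indexed by [m]~ = option 'I_m, None standing for o *)
Definition hyp (i : option 'I_m) (x : pt) :=
  match i with
  | Some j => hypm j x
  | None => dot x lam0 + xi = 0
  end.

Definition facet (i : option 'I_m) (x : pt) := Delta x /\ hyp i x.

Definition Dpm (b : bool) (x : pt) :=
  Delta x /\ (if b then 0 <= dot x lam0 + xi else dot x lam0 + xi <= 0).

Definition vertex (v : pt) :=
  Delta v /\ forall a b (t : R), Delta a -> Delta b -> 0 < t -> t < 1 ->
    v = t *: a + (1 - t) *: b -> a = v.

(* Delta is an n-dimensional simple polytope whose facets are the
   (pairwise distinct, nonempty) H_1, ..., H_m *)
Definition simple_polytope :=
  [/\ (exists M : R, forall x, Delta x -> forall j, `|x 0 j| <= M),
      affdim Delta n,
      (forall i, affdim (facetm i) (n%:Z - 1)),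
      (forall i j, i <> j -> ~ (forall x, facetm i x <-> facetm j x)) &
      (forall v, vertex v ->
         exists S : {set 'I_m}, #|S| = n /\ forall i, i \in S <-> hypm i v)].

Definition Lsub (s : {set 'I_m}) (x : pt) := forall i, i \in s -> hypm i x.

Definition generic_cut :=
  [/\ lam0 != 0,
      (forall (s : {set 'I_m}) (d : int), (exists x, Lsub s x) ->
         affdim (Lsub s) d ->
         affdim (fun x => Lsub s x /\ hyp None x) (d - 1)) &
      (exists x, facet None x)].

Definition KDelta : complex (option 'I_m) :=
  fun s => None \notin s /\
           (s = set0 \/ exists x, forall i, i \in s -> facet i x).

Definition Kpm (b : bool) : complex (option 'I_m) :=
  fun s => s = set0 \/ exists x, Dpm b x /\ forall i, i \in s -> facet i x.

Definition Fsig (s : {set option 'I_m}) (x : pt) :=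
  Delta x /\ forall i, i \in s -> hyp i x.

Definition Zcut : complex (option 'I_m) :=
  fun s => (exists x, Fsig s x) /\
           (forall x, Fsig s x -> Dpm true x /\ ~ facet None x).
End Geometry.

(* Main.v *)
Require Import Defs.
From HB Require Import structures.
From mathcomp Require Import all_boot all_order all_algebra.
From mathcomp Require Import reals.
From Stdlib Require Import Classical.
From mathcomp Require Import ring lra.
Set Implicit Arguments. Unset Strict Implicit. Unset Printing Implicit Defensive.
Import Order.TTheory GRing.Theory Num.Theory.
Local Open Scope ring_scope.

Section Dot.
Variables (R : realType) (n : nat).
Local Notation pt := 'rV[R]_n.
Lemma dotDl (a b c : pt) : dot (a + b) c = dot a c + dot b c.
Proof. rewrite /dot -big_split; apply: eq_bigr => i _; by rewrite mxE mulrDl. Qed.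
Lemma dotZl k (a c : pt) : dot (k *: a) c = k * dot a c.
Proof. rewrite /dot mulr_sumr; apply: eq_bigr => i _; by rewrite mxE mulrA. Qed.
Lemma dotNl (a c : pt) : dot (- a) c = - dot a c.
Proof. by rewrite -scaleN1r dotZl mulN1r. Qed.
Lemma dotBl (a b c : pt) : dot (a - b) c = dot a c - dot b c.
Proof. by rewrite dotDl dotNl. Qed.
Lemma dot0l (c : pt) : dot 0 c = 0.
Proof. by rewrite -(scale0r 0) dotZl mul0r. Qed.

Lemma rank_arg k (w : 'I_k -> pt) :
  (forall u : pt, (forall i, dot u (w i) = 0) -> u = 0) -> (n <= k)%N.
Proof.
move=> H; rewrite leqNgt; apply/negP => ltkn.
pose M : 'M[R]_(n, k) := \matrix_(j, i) w i 0 j.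
have nf : ~~ row_free M.
  rewrite /row_free; apply/negP => /eqP e.
  by move: (rank_leq_col M); rewrite e leqNgt ltkn.
have : kermx M != 0 by rewrite kermx_eq0.
case/rowV0Pn => v /sub_kermxP vM vn0.
have : v = 0.
  apply: H => i; rewrite /dot.
  have := congr1 (fun A : 'M[R]_(1, k) => A 0 i) vM; rewrite !mxE => E.
  rewrite -[RHS]E; apply: eq_bigr => j _; by rewrite mxE.
by move=> v0; move: vn0; rewrite v0 eqxx.
Qed.
End Dot.

Section Poly.
Variables (R : realType) (n m : nat) (lam : 'I_m -> 'rV[R]_n) (eta : 'I_m -> R).
Local Notation pt := 'rV[R]_n.
Local Notation Dl := (Delta lam eta).
Definition vl i (x : pt) := dot x (lam i) + eta i.
Definition T (x : pt) : {set 'I_m} := [set i | vl i x == 0].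
Definition perp (u : pt) (S : {set 'I_m}) := forall i, i \in S -> dot u (lam i) = 0.

Lemma inT i x : (i \in T x) = (vl i x == 0).
Proof. by rewrite inE. Qed.

Lemma val_move i (x u : pt) s : vl i (x + s *: u) = vl i x + s * dot u (lam i).
Proof. rewrite /vl dotDl dotZl; lra. Qed.

Lemma val_comb i (a b : pt) t :
  vl i (t *: a + (1 - t) *: b) = t * vl i a + (1 - t) * vl i b.
Proof. rewrite /vl dotDl !dotZl; lra. Qed.

Hypothesis bounded : exists M : R, forall x, Dl x -> forall j, `|x 0 j| <= M.

Lemma move (x u : pt) : Dl x -> u != 0 -> perp u (T x) ->
  exists s, 0 < s /\ Dl (x + s *: u) /\ T x \proper T (x + s *: u).
Proof.
move=> Dx un0 pu.
case: (pickP [pred j | dot u (lam j) < 0]) => [j0 Hj0 | none]; last first.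
  exfalso; case: bounded => M HM.
  case/rV0Pn: un0 => k uk.
  have uk0 : 0 < `|u 0 k| by rewrite normr_gt0.
  have xM : `|x 0 k| <= M by exact: HM.
  pose s := (M + `|x 0 k| + 1) / `|u 0 k|.
  have s0 : 0 <= s by apply: divr_ge0; rewrite ?normr_ge0 //; have := normr_ge0 (x 0 k); lra.
  have Dy : Dl (x + s *: u).
    move=> i; rewrite -/(vl i _) val_move.
    have := none i; rewrite /= => /negbT; rewrite -leNgt => d0.
    have := Dx i; rewrite -/(vl i x) => v0.
    by apply: addr_ge0 => //; apply: mulr_ge0.
  have := HM _ Dy k; rewrite !mxE.
  have := lerB_normD (s * u 0 k) (x 0 k).
  rewrite normrM (ger0_norm s0) /s mulfVK ?gt_eqF // addrC => h1 h2.
  lra.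
pose P := [pred j | dot u (lam j) < 0].
pose r j := vl j x / (- dot u (lam j)).
case: (@arg_minP _ R _ j0 P r Hj0) => j Pj minj.
have dj : dot u (lam j) < 0 by exact: Pj.
have vj : 0 < vl j x.
  rewrite lt0r Dx andbT; apply/negP => /eqP vj0.
  have : j \in T x by rewrite inT vj0.
  by move/pu => e; move: dj; rewrite e ltxx.
have s0 : 0 < r j by apply: divr_gt0 => //; rewrite oppr_gt0.
exists (r j); split => //; split.
  move=> i; rewrite -/(vl i _) val_move.
  have := Dx i; rewrite -/(vl i x) => v0.
  case: (ltP (dot u (lam i)) 0) => di.
    have := minj i di; rewrite /r ler_pdivlMr ?oppr_gt0 // => h.
    rewrite mulrN in h. lra.
  by apply: addr_ge0 => //; apply: mulr_ge0 => //; apply: ltW.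
rewrite properEneq; apply/andP; split.
  apply/negP => /eqP E.
  have : j \in T (x + r j *: u).
    rewrite inT val_move /r invrN mulrN mulNr divfK ?subrr //.
    by rewrite lt_eqF.
  by rewrite -E inT gt_eqF.
apply/subsetP => i; rewrite !inT val_move => /eqP vi.
by rewrite pu ?inT ?vi // mulr0 addr0.
Qed.


Lemma comb_line (v u : pt) t a b :
  t *: (v + a *: u) + (1 - t) *: (v + b *: u) = v + (t * a + (1 - t) * b) *: u.
Proof.
rewrite !scalerDr !scalerA addrACA -!scalerDl.
have -> : t + (1 - t) = 1 by lra.
by rewrite scale1r.
Qed.

Lemma perpN u S : perp u S -> perp (- u) S.
Proof. by move=> p i /p; rewrite dotNl => ->; rewrite oppr0. Qed.

Lemma noperp_vertex x : Dl x -> (forall u, perp u (T x) -> u = 0) ->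
  vertex lam eta x.
Proof.
move=> Dx H; split => // a b t Da Db t0 t1 E.
have : a - x = 0.
  apply: H => i; rewrite inT => /eqP vx.
  have := val_comb i a b t; rewrite -E vx => e.
  have va := Da i; have vb := Db i; rewrite -/(vl i a) in va; rewrite -/(vl i b) in vb.
  have h1 : 0 <= t * vl i a by apply: mulr_ge0 => //; apply: ltW.
  have h2 : 0 <= (1 - t) * vl i b by apply: mulr_ge0 => //; lra.
  have : t * vl i a = 0 by lra.
  move/eqP; rewrite mulf_eq0 gt_eqF //= => /eqP vA.
  rewrite dotBl; move: vA vx; rewrite /vl; lra.
by move/eqP; rewrite subr_eq0 => /eqP.
Qed.

Lemma vertex_noperp v u : vertex lam eta v -> perp u (T v) -> u = 0.
Proof.
move=> [Dv V] pu; apply/eqP; apply/negP => /negP un0.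
have [s1 [s10 [D1 _]]] := move Dv un0 pu.
have un0' : - u != 0 by rewrite oppr_eq0.
have [s2 [s20 [D2 _]]] := move Dv un0' (perpN pu).
have e : v = (s2 / (s1 + s2)) *: (v + s1 *: u) + (1 - s2 / (s1 + s2)) *: (v + (- s2) *: u).
  rewrite comb_line.
  have -> : s2 / (s1 + s2) * s1 + (1 - s2 / (s1 + s2)) * - s2 = 0.
    field; rewrite gt_eqF //; lra.
  by rewrite scale0r addr0.
rewrite scaleNr -scalerN in e.
have ht0 : 0 < s2 / (s1 + s2) by apply: divr_gt0 => //; lra.
have ht1 : s2 / (s1 + s2) < 1 by rewrite ltr_pdivrMr; lra.
have := V _ _ _ D1 D2 ht0 ht1 e.
move/eqP; rewrite -subr_eq0 addrC addKr scaler_eq0 gt_eqF //=.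
by move/eqP=> u0; move: un0; rewrite u0 eqxx.
Qed.

Lemma vertex_or_dir x : Dl x ->
  vertex lam eta x \/ exists u, u != 0 /\ perp u (T x).
Proof.
move=> Dx; case: (classic (exists u, u != 0 /\ perp u (T x))) => [h|h]; [by right|left].
apply: noperp_vertex => // u pu; apply/eqP; apply/negP => /negP un0.
by apply: h; exists u.
Qed.

Lemma descend (g : pt) x : Dl x ->
  exists v, [/\ vertex lam eta v, T x \subset T v & dot v g <= dot x g].
Proof.
move: x; suff: forall k x, (#|~: T x| <= k)%N -> Dl x ->
  exists v, [/\ vertex lam eta v, T x \subset T v & dot v g <= dot x g].
  by move=> H x; apply: (H _ x (leqnn _)).
elim=> [|k IH] x lek Dx.
  case: (vertex_or_dir Dx) => [V|[u [un0 pu]]]; first by exists x.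
  have [s [s0 [Dy Pr]]] := move Dx un0 pu.
  have := proper_card (introT idP (etrans (properC _ _) Pr)).
  by move: lek; rewrite leqn0 => /eqP ->.
case: (vertex_or_dir Dx) => [V|[u [un0 pu]]]; first by exists x.
wlog ug : u un0 pu / dot u g <= 0.
  move=> W; case: (leP (dot u g) 0) => h; first exact: (W u).
  apply: (W (- u)); rewrite ?oppr_eq0 ?dotNl ?oppr_le0 //; last by apply: ltW.
  exact: perpN.
have [s [s0 [Dy Pr]]] := move Dx un0 pu.
have lt := proper_card (introT idP (etrans (properC _ _) Pr)).
have H1 : (#|~: T (x + s *: u)| <= k)%N by rewrite -ltnS; apply: leq_trans lek.
have [v [Vv Tv dv]] := IH (x + s *: u) H1 Dy.
exists v; split => //.
  exact: subset_trans (proper_sub Pr) Tv.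
apply: le_trans dv _; rewrite dotDl dotZl.
have : s * dot u g <= 0 by apply: mulr_ge0_le0 => //; apply: ltW.
lra.
Qed.

Lemma vertex_point v z : vertex lam eta v ->
  (forall i, i \in T v -> vl i z = 0) -> z = v.
Proof.
move=> V H; have : z - v = 0.
  apply: vertex_noperp V _ => i iT; rewrite dotBl.
  have := H i iT; move: iT; rewrite inT => /eqP; rewrite /vl; lra.
by move/eqP; rewrite subr_eq0 => /eqP.
Qed.
End Poly.

Lemma affdim_point (R : realType) (n : nat) (S : 'rV[R]_n -> Prop) p :
  (forall z, S z <-> z = p) -> affdim S 0.
Proof.
move=> H; split.
  exists (fun _ => p); split; first by move=> i; apply/H.
  move=> c; rewrite big_ord1 => c0 _ i; by rewrite (ord1 i).
case=> q [Sq Iq].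
pose c := fun i : 'I_2 => if i == ord0 then (1 : R) else -1.
have := Iq c _ _ ord0; rewrite /c eqxx => h.
suff : (1 : R) = 0 by move/eqP; rewrite oner_eq0.
apply: h.
  by rewrite big_ord_recl big_ord1 /=; lra.
rewrite big_ord_recl big_ord1 /= !(proj1 (H _) (Sq _)).
by rewrite scaleN1r scale1r subrr.
Qed.

Section Main.
Variables (R : realType) (n m : nat) (lam : 'I_m -> 'rV[R]_n) (eta : 'I_m -> R)
          (lam0 : 'rV[R]_n) (xi : R).
Local Notation pt := 'rV[R]_n.
Local Notation Dl := (Delta lam eta).
Local Notation T := (T lam eta).
Local Notation perp := (perp lam).
Hypothesis SP : simple_polytope lam eta.
Hypothesis GC : generic_cut lam eta lam0 xi.

Definition f (x : pt) := dot x lam0 + xi.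
Definition Tp (x : pt) : {set option 'I_m} :=
  [set i | if i is Some j then j \in T x else f x == 0].

Lemma TpS j x : (Some j \in Tp x) = (j \in T x).
Proof. by rewrite inE. Qed.
Lemma TpN x : (None \in Tp x) = (f x == 0).
Proof. by rewrite inE. Qed.

Lemma TpE x : Tp x = if f x == 0 then None |: (Some @: T x) else Some @: T x.
Proof.
have mS j : (Some j \in Some @: T x) = (j \in T x) by rewrite (mem_imset _ _ Some_inj).
have mN : (None \in Some @: T x) = false by apply/imsetP => -[].
apply/setP => -[j|]; case: ifP => h; rewrite !inE ?mS ?mN ?h //=.
all: by rewrite inT.
Qed.

Lemma card_Tp x : #|Tp x| = (#|T x| + (f x == 0%R))%N.
Proof.
rewrite TpE; case: ifP => h; last by rewrite card_imset ?addn0 //; exact: Some_inj.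
rewrite cardsU1 card_imset; last exact: Some_inj.
by rewrite addnC; congr (_ + _)%N; case: imsetP => // -[].
Qed.

Lemma hypE i x : hyp lam eta lam0 xi i x <-> i \in Tp x.
Proof.
case: i => [j|]; rewrite ?TpS ?TpN ?inT /= ?/f; last by split => [->|/eqP].
by rewrite /hypm /vl; split => [->|/eqP].
Qed.

Lemma allE (s : {set option 'I_m}) x :
  (forall i, i \in s -> hyp lam eta lam0 xi i x) <-> s \subset Tp x.
Proof.
split => [H|/subsetP H i /H ?]; last exact/hypE.
by apply/subsetP => i /H ?; apply/hypE.
Qed.

Lemma facetsE (s : {set option 'I_m}) x : Dl x ->
  ((forall i, i \in s -> facet lam eta lam0 xi i x) <-> s \subset Tp x).
Proof.
move=> Dx; rewrite -allE; split => H i /H //; by move=> [].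
Qed.

Lemma KpE b s : Kpm lam eta lam0 xi b s <-> s = set0 \/
  exists x, [/\ Dl x, (if b then 0 <= f x else f x <= 0) & s \subset Tp x].
Proof.
split.
  case=> [->|[x [[Dx bx] H]]]; [by left | right; exists x].
  by split => //; apply/facetsE.
case=> [->|[x [Dx bx H]]]; [by left | right; exists x].
by split => //; apply/facetsE.
Qed.

Lemma KDE s : KDelta lam eta lam0 xi s <->
  None \notin s /\ (s = set0 \/ exists x, Dl x /\ s \subset Tp x).
Proof.
split.
  case=> Hn [->|[x H]].
    by rewrite in_set0; split => //; left.
  split => //.
  case: (set_0Vmem s) => [->|[i /[dup] iS /H [Dx _]]]; [by left | right; exists x].
  by split => //; apply/facetsE.
case=> Hn [->|[x [Dx H]]].
  by split; [rewrite in_set0 | left].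
by split => //; right; exists x; apply/facetsE.
Qed.

Lemma ZE s : Zcut lam eta lam0 xi s <->
  (exists x, Dl x /\ s \subset Tp x) /\ (forall x, Dl x -> s \subset Tp x -> 0 < f x).
Proof.
have FE x : Fsig lam eta lam0 xi s x <-> Dl x /\ s \subset Tp x.
  by split => -[Dx H]; split => //; apply/allE.
split.
  case=> [[x /FE Hx] H]; split; first by exists x.
  move=> y Dy sy; have [[_ h1] h2] := H y (proj2 (FE y) (conj Dy sy)).
  rewrite lt_neqAle h1 andbT; apply/negP => /eqP e; apply: h2; split => //.
case=> [[x Hx] H]; split; first by exists x; apply/FE.
move=> y /FE [Dy sy]; have := H y Dy sy => fy.
split; first by split => //; apply: ltW.
by move=> [_ /= e]; move: fy; rewrite /f e ltxx.
Qed.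

Lemma bnd : exists M : R, forall x, Dl x -> forall j, `|x 0 j| <= M.
Proof. by case: SP. Qed.

Lemma vcard v : vertex lam eta v -> #|T v| = n.
Proof.
move=> V; case: SP => _ _ _ _ /(_ v V) [S [cS HS]].
rewrite -[RHS]cS; apply: eq_card => i; rewrite inT.
apply/idP/idP => [/eqP h|/HS h]; first exact/HS.
by apply/eqP.
Qed.

Lemma Lsub_point (S : {set 'I_m}) x : Dl x -> S \subset T x ->
  (forall u, perp u S -> u = 0) -> affdim (Lsub lam eta S) 0.
Proof.
move=> Dx /subsetP Sx H; apply: (affdim_point (p := x)) => z; split.
  move=> Lz; have : z - x = 0.
    apply: H => i iS; rewrite dotBl.
    have := Lz i iS; have := Sx i iS; rewrite inT => /eqP; rewrite /hypm /vl; lra.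
  by move/eqP; rewrite subr_eq0 => /eqP.
move=> -> i /Sx; rewrite inT => /eqP; by [].
Qed.

Lemma generic_point (S : {set 'I_m}) x : Dl x -> S \subset T x ->
  (forall u, perp u S -> u = 0) -> f x != 0.
Proof.
move=> Dx Sx H; case: GC => _ G _.
have ex : exists y, Lsub lam eta S y.
  by exists x => i /(subsetP Sx); rewrite inT => /eqP.
have := G S 0 ex (Lsub_point Dx Sx H) x => /= h.
apply/eqP => e; apply: h; split; last by [].
by move=> i /(subsetP Sx); rewrite inT => /eqP.
Qed.

Lemma vf v : vertex lam eta v -> f v != 0.
Proof.
move=> V; apply: (generic_point (S := T v)) => //; first by case: V.
by move=> u pu; exact: (vertex_noperp bnd V pu).
Qed.

Lemma Ho : exists h, Dl h /\ f h = 0.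
Proof. by case: GC => _ _ [h [Dh e]]; exists h. Qed.

Lemma f_move x u s : f (x + s *: u) = f x + s * dot u lam0.
Proof. rewrite /f dotDl dotZl; lra. Qed.

Lemma f_comb (a b : pt) t : f (t *: a + (1 - t) *: b) = t * f a + (1 - t) * f b.
Proof. rewrite /f dotDl !dotZl; lra. Qed.

Lemma Dl_comb (a b : pt) t : Dl a -> Dl b -> 0 <= t -> t <= 1 ->
  Dl (t *: a + (1 - t) *: b).
Proof.
move=> Da Db t0 t1 i; rewrite -/(vl lam eta i _) val_comb.
have := Da i; have := Db i; rewrite -/(vl lam eta i _) -/(vl lam eta i _) => h1 h2.
apply: addr_ge0; apply: mulr_ge0 => //; lra.
Qed.


Local Notation Kp := (Kpm lam eta lam0 xi true).
Local Notation Km := (Kpm lam eta lam0 xi false).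
Local Notation KD := (KDelta lam eta lam0 xi).
Local Notation Z := (Zcut lam eta lam0 xi).

Lemma Zpos (t : {set option 'I_m}) x : Z t -> Dl x -> t \subset Tp x -> 0 < f x.
Proof. by move/ZE => [_ H]; apply: H. Qed.

Lemma NoneN (s : {set option 'I_m}) x : 0 < f x -> s \subset Tp x -> None \notin s.
Proof.
move=> fx sx; apply/negP => /(subsetP sx); rewrite TpN => /eqP e.
by move: fx; rewrite e ltxx.
Qed.

Lemma cs1 (s : {set option 'I_m}) : Z s -> Kp s /\ KD s.
Proof.
move=> Zs; have [[x [Dx sx]] _] := proj1 (ZE s) Zs.
have fx := Zpos Zs Dx sx; have Nn := NoneN fx sx.
split; first by apply/KpE; right; exists x; split => //; exact: ltW.
by apply/KDE; split => //; right; exists x.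
Qed.

Lemma cs2 : ~ Z set0.
Proof.
move=> Z0; case: Ho => h [Dh fh]; have := Zpos Z0 Dh (sub0set _).
by rewrite fh ltxx.
Qed.

Lemma wit (s : {set option 'I_m}) : Kp s \/ KD s -> s = set0 \/ exists x, Dl x /\ s \subset Tp x.
Proof.
case=> [/KpE [->|[x [Dx _ sx]]] | /KDE [_ [->|[x [Dx sx]]]]];
  by [left | right; exists x].
Qed.

Lemma sub0 (t : {set option 'I_m}) : t \subset set0 -> t = set0.
Proof. by move=> h; apply/eqP; rewrite -subset0. Qed.

Lemma cs3 (s : {set option 'I_m}) : starO (cunion Kp KD) Z s -> Kp s /\ KD s.
Proof.
move=> [K [t [Zt ts]]]; case: (wit K) => [e|[x [Dx sx]]].
  by move: ts; rewrite e => /sub0 e'; move: Zt; rewrite e' => /cs2.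
have fx := Zpos Zt Dx (subset_trans ts sx); have Nn := NoneN fx sx.
split; first by apply/KpE; right; exists x; split => //; exact: ltW.
by apply/KDE; split => //; right; exists x.
Qed.

Lemma cs4 (s : {set option 'I_m}) : Km s <-> Del Z (cunion Kp KD) s.
Proof.
split.
  move/KpE => [->|[x [Dx fx sx]]].
    split; first by left; apply/KpE; left.
    by move=> [_ [t [Zt /sub0 e]]]; move: Zt; rewrite e => /cs2.
  split.
    case: (eqVneq (f x) 0) => e.
      by left; apply/KpE; right; exists x; split => //; rewrite e.
    right; apply/KDE; split.
      by apply/negP => /(subsetP sx); rewrite TpN (negbTE e).
    by right; exists x.
  move=> [_ [t [Zt ts]]]; have := Zpos Zt Dx (subset_trans ts sx); lra.
move=> [K nS]; case: (wit K) => [->|[x [Dx sx]]]; first by apply/KpE; left.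
case: (classic (exists y, [/\ Dl y, s \subset Tp y & f y <= 0])).
  by move=> [y [Dy sy fy]]; apply/KpE; right; exists y.
move=> H; exfalso; apply: nS; split => //; exists s; split => //.
apply/ZE; split; first by exists x.
move=> y Dy sy; rewrite ltNge; apply/negP => fy; apply: H; by exists y.
Qed.

Lemma imS j (A : {set 'I_m}) : (Some j \in Some @: A) = (j \in A).
Proof. by rewrite (mem_imset _ _ Some_inj). Qed.
Lemma imN (A : {set 'I_m}) : (None \in Some @: A) = false.
Proof. by apply/imsetP => -[]. Qed.

Lemma imTp (A : {set 'I_m}) x : (Some @: A \subset Tp x) = (A \subset T x).
Proof.
apply/subsetP/subsetP => H i.
  by move=> iA; rewrite -TpS; apply: H; rewrite imS.
by case: i => [j|]; rewrite ?imS ?imN // TpS => /H.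
Qed.

Lemma comb_sub (s : {set option 'I_m}) x y t : s \subset Tp x -> s \subset Tp y ->
  None \notin s -> s \subset Tp (t *: y + (1 - t) *: x).
Proof.
move=> /subsetP sx /subsetP sy Nn; apply/subsetP => -[j|] i; last by rewrite i in Nn.
have := sx _ i; have := sy _ i; rewrite !TpS !inT val_comb => /eqP -> /eqP ->.
by rewrite !mulr0 addr0.
Qed.

Lemma z3 (s : {set option 'I_m}) :
  Z s <-> (Kp s /\ KD s) /\ ~ Defs.closure (cdiff Kp (cinter Kp KD)) s.
Proof.
split.
  move=> Zs; split; first exact: cs1.
  move=> [e|[t [[Kt nWt] st]]]; first by move: Zs; rewrite e => /cs2.
  case/KpE: (Kt) => [e|[z [Dz fz tz]]].
    by move: st; rewrite e => /sub0 e'; move: Zs; rewrite e' => /cs2.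
  have fz' := Zpos Zs Dz (subset_trans st tz).
  apply: nWt; split => //; apply/KDE; split; first exact: NoneN fz' tz.
  by right; exists z.
move=> [[Kps KDs] nc]; case/KpE: (Kps) => [e|[x [Dx fx sx]]].
  by exfalso; apply: nc; left.
have Nn : None \notin s by case/KDE: KDs.
apply/ZE; split; first by exists x.
move=> y Dy sy; rewrite ltNge; apply/negP => fy; apply: nc; right.
have [z [Dz fz sz]] : exists z, [/\ Dl z, f z = 0 & s \subset Tp z].
  case: (eqVneq (f x) 0) => fx0; first by exists x.
  have fxp : 0 < f x by rewrite lt_neqAle eq_sym fx0.
  pose t := f x / (f x - f y).
  exists (t *: y + (1 - t) *: x); split.
  - apply: Dl_comb => //; first by apply: divr_ge0; lra.
    by rewrite ler_pdivrMr; lra.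
  - rewrite f_comb /t; field; rewrite gt_eqF //; lra.
  - exact: comb_sub.
exists (None |: s); split; last exact: subsetUr.
split.
  apply/KpE; right; exists z; split => //; first by rewrite fz.
  by rewrite subUset sub1set TpN fz eqxx.
by move=> [_ /KDE [/negP h _]]; apply: h; rewrite setU11.
Qed.

Lemma z4 (s : {set option 'I_m}) :
  Z s <-> (Kp s /\ KD s) /\ ~ Defs.closure (cdiff KD (cinter Kp KD)) s.
Proof.
split.
  move=> Zs; split; first exact: cs1.
  move=> [e|[t [[Kt nWt] st]]]; first by move: Zs; rewrite e => /cs2.
  case/KDE: (Kt) => [Nt [e|[z [Dz tz]]]].
    by move: st; rewrite e => /sub0 e'; move: Zs; rewrite e' => /cs2.
  have fz' := Zpos Zs Dz (subset_trans st tz).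
  apply: nWt; split => //; apply/KpE; right; exists z; split => //; exact: ltW.
move=> [[Kps KDs] nc]; case/KpE: (Kps) => [e|[x [Dx fx sx]]].
  by exfalso; apply: nc; left.
have Nn : None \notin s by case/KDE: KDs.
apply/ZE; split; first by exists x.
move=> y Dy sy; rewrite ltNge; apply/negP => fy; apply nc; right.
have [v [V Tv dv]] := descend bnd lam0 Dy.
have fv : f v < 0.
  rewrite lt_neqAle vf //=; move: dv fy; rewrite /f; lra.
have sv : s \subset Some @: T v.
  apply/subsetP => -[j|] i; last by rewrite i in Nn.
  by rewrite imS; apply: (subsetP Tv); rewrite -TpS; apply: (subsetP sy).
exists (Some @: T v); split => //; split.
  apply/KDE; split; first by rewrite imN.
  by right; exists v; split; [case: V | rewrite imTp].
move=> [/KpE [e|[z [Dz fz tz]]] _].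
  move: sv; rewrite e => /sub0 e'; apply: nc; left; exact: e'.
have zv : z = v.
  apply: (vertex_point bnd V) => i iT; apply/eqP; rewrite -inT.
  by move: tz; rewrite imTp => /subsetP; apply.
by move: fz; rewrite zv; lra.
Qed.

Lemma maxc (K : complex (option 'I_m)) s t :
  maximal_face K s -> K t -> s \proper t -> False.
Proof.
move=> [_ M] Kt st; have e := M t Kt (proper_sub st).
by move: st; rewrite e properxx.
Qed.

Lemma grow_up x : Dl x -> ~ vertex lam eta x ->
  exists y, [/\ Dl y, T x \proper T y & f x <= f y].
Proof.
move=> Dx nV; case: (vertex_or_dir Dx) => [//|[u [un0 pu]]].
wlog ug : u un0 pu / 0 <= dot u lam0.
  move=> W; case: (leP 0 (dot u lam0)) => h; first exact: (W u).
  apply: (W (- u)); rewrite ?oppr_eq0 ?dotNl ?oppr_ge0 //; last by apply: ltW.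
  exact: perpN.
have [s [s0 [Dy Pr]]] := move bnd Dx un0 pu.
exists (x + s *: u); split => //; rewrite f_move.
have : 0 <= s * dot u lam0 by apply: mulr_ge0 => //; apply: ltW.
lra.
Qed.

Lemma imsetP' (A B : {set 'I_m}) : A \proper B -> Some @: A \proper Some @: B.
Proof. by move=> h; apply: imset_proper => // a b _ _; exact: Some_inj. Qed.

Lemma Tp_proper x y : T x \proper T y -> (f x = 0 -> f y = 0) -> Tp x \proper Tp y.
Proof.
move=> /properP [sub [j jy jx]] ff; apply/properP; split.
  apply/subsetP => -[k|]; rewrite ?TpS ?TpN; first exact: (subsetP sub).
  by move/eqP/ff => ->.
by exists (Some j); rewrite TpS.
Qed.

Lemma pureKD : pure_card KD n.
Proof.
move=> s Ms; have [Ks _] := Ms; case/KDE: (Ks) => Nn Hs.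
have [x [Dx sx]] : exists x, Dl x /\ s \subset Tp x.
  case: Hs => [->|//]; case: Ho => h [Dh _]; exists h; split => //; exact: sub0set.
have st : s \subset Some @: T x.
  apply/subsetP => -[j|] i; last by rewrite i in Nn.
  by rewrite imS -TpS; apply: (subsetP sx).
have KDt : forall y, Dl y -> KD (Some @: T y).
  move=> y Dy; apply/KDE; split; first by rewrite imN.
  by right; exists y; split => //; rewrite imTp.
have e : Some @: T x = s by case: Ms => _ M; apply: M => //; exact: KDt.
case: (classic (vertex lam eta x)) => V.
  by rewrite -e card_imset ?vcard //; exact: Some_inj.
have [y [Dy Pr _]] := grow_up Dx V.
exfalso; apply: (maxc Ms (KDt y Dy)); rewrite -e; exact: imsetP'.
Qed.

Lemma pureW : pure_card (cinter Kp KD) n.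
Proof.
move=> s Ms; have [[Kps KDs] _] := Ms; case/KDE: (KDs) => Nn _.
have [x [Dx fx sx]] : exists x, [/\ Dl x, 0 <= f x & s \subset Tp x].
  case/KpE: Kps => [->|[x [Dx fx sx]]]; last by exists x.
  case: Ho => h [Dh fh]; exists h; split => //; [by rewrite fh | exact: sub0set].
have st : s \subset Some @: T x.
  apply/subsetP => -[j|] i; last by rewrite i in Nn.
  by rewrite imS -TpS; apply: (subsetP sx).
have Wt : forall y, Dl y -> 0 <= f y -> cinter Kp KD (Some @: T y).
  move=> y Dy fy; split.
    by apply/KpE; right; exists y; split => //; rewrite imTp.
  apply/KDE; split; first by rewrite imN.
  by right; exists y; split => //; rewrite imTp.
have e : Some @: T x = s by case: Ms => _ M; apply: M => //; exact: Wt.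
case: (classic (vertex lam eta x)) => V.
  by rewrite -e card_imset ?vcard //; exact: Some_inj.
have [y [Dy Pr fy]] := grow_up Dx V.
exfalso; apply: (maxc Ms (Wt y Dy (le_trans fx fy))); rewrite -e; exact: imsetP'.
Qed.

Lemma pureKp : pure_card Kp n.
Proof.
move=> s Ms; have [Kps _] := Ms.
have [x [Dx fx sx]] : exists x, [/\ Dl x, 0 <= f x & s \subset Tp x].
  case/KpE: Kps => [->|[x [Dx fx sx]]]; last by exists x.
  case: Ho => h [Dh fh]; exists h; split => //; [by rewrite fh | exact: sub0set].
have KpT : forall y, Dl y -> 0 <= f y -> Kp (Tp y).
  by move=> y Dy fy; apply/KpE; right; exists y.
have e : Tp x = s by case: Ms => _ M; apply: M => //; exact: KpT.
rewrite -e card_Tp.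
case: (eqVneq (f x) 0) => fx0; last first.
  rewrite addn0; case: (classic (vertex lam eta x)) => V; first exact: vcard.
  have [y [Dy Pr fy]] := grow_up Dx V.
  exfalso; apply: (maxc Ms (KpT y Dy (le_trans fx fy))); rewrite -e.
  apply: Tp_proper => // h; by move: fx0; rewrite h eqxx.
have A : forall u, perp u (T x) -> dot u lam0 = 0 -> u = 0.
  move=> u pu d0; apply/eqP; apply/negP => /negP un0.
  have [s0 [s00 [Dy Pr]]] := move bnd Dx un0 pu.
  have fy : f (x + s0 *: u) = 0 by rewrite f_move d0 mulr0 addr0 fx0.
  have fy0 : 0 <= f (x + s0 *: u) by rewrite fy.
  apply: (maxc Ms (KpT _ Dy fy0)); rewrite -e.
  by apply: Tp_proper => // _.
apply/eqP; rewrite eqn_leq; apply/andP; split; last first.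
  pose w (i : 'I_(#|T x| + 1)) : pt :=
    match split i with inl a => lam (enum_val a) | inr _ => lam0 end.
  apply: (rank_arg (w := w)) => u H; apply: A.
    move=> j jT; have := H (unsplit (inl (enum_rank_in jT j))).
    by rewrite /w unsplitK (enum_rankK_in jT jT).
  by have := H (unsplit (inr ord0)); rewrite /w unsplitK.
have [u [un0 pu]] : exists u, u != 0 /\ perp u (T x).
  apply: NNPP => H.
  have : f x != 0.
    apply: (@generic_point (T x) x Dx (subxx _)) => u pu.
    apply/eqP; apply/negP => /negP un0; apply: H; by exists u.
  by rewrite fx0 eqxx.
have d0 : dot u lam0 != 0 by apply/eqP => /(A u pu) e0; rewrite e0 eqxx in un0.
have [s0 [s00 [Dy Pr]]] := move bnd Dx un0 pu.
have Vy : vertex lam eta (x + s0 *: u).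
  apply: (noperp_vertex Dy) => w pw.
  have pwx : perp w (T x) by move=> i iT; apply: pw; apply: (subsetP (proper_sub Pr)).
  pose c := dot u lam0 *: w - dot w lam0 *: u.
  have c0 : c = 0.
    apply: A.
      move=> i iT; rewrite /c dotBl !dotZl pwx // pu //; lra.
    rewrite /c dotBl !dotZl; lra.
  have [_ [j jy jx]] := properP Pr.
  have duj : dot u (lam j) != 0.
    apply/eqP => h; move: jx; rewrite !inT in jy *; rewrite val_move h mulr0 addr0 in jy.
    by rewrite jy.
  have dwj : dot w (lam j) = 0 by apply: pw.
  have : dot c (lam j) = 0 by rewrite c0 dot0l.
  rewrite /c dotBl !dotZl dwj mulr0 sub0r => /eqP; rewrite oppr_eq0 mulf_eq0 (negbTE duj) orbF.
  move=> /eqP dw0; move: c0; rewrite /c dw0 scale0r subr0 => /eqP.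
  by rewrite scaler_eq0 (negbTE d0) /= => /eqP.
have := vcard Vy; have := proper_card Pr => lt cy.
rewrite /= addn1; apply: leq_trans lt _; by rewrite cy.
Qed.

Lemma main_sec : strong_connected_sum Kp KD Z Km.
Proof.
split.
- split; [exact: cs1 | exact: cs2 | exact: cs3 | exact: cs4].
- by exists n; split; [exact: pureKp | exact: pureKD | exact: pureW].
- exact: z3.
- exact: z4.
Qed.

End Main.

Theorem theorem3p12 (R : realType) (n m : nat)
  (lam : 'I_m -> 'rV[R]_n) (eta : 'I_m -> R) (lam0 : 'rV[R]_n) (xi : R) :
  simple_polytope lam eta ->
  generic_cut lam eta lam0 xi ->
  strong_connected_sum (Kpm lam eta lam0 xi true) (KDelta lam eta lam0 xi)
    (Zcut lam eta lam0 xi) (Kpm lam eta lam0 xi false).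
Proof. move=> SP GC; exact: main_sec. Qed.
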